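(* Define real sequences $(x_n)$, $(y_n)$ by, for $n\ge 0$: $x_{4n+1}=0$, $x_{4n+2}=3^{-(n+1)}$, $x_{4n+3}=2\cdot3^{-(n+1)}$, $x_{4n+4}=9\cdot 3^{-(n+1)}$, and $y_{4n+1}=6^{-(n+1)}$, $y_{4n+2}=y_{4n+3}=y_{4n+4}=-6^{-(n+1)}$. Let $E=E(x_n,y_n)\subset\mathbb R^2$. Then: (a) $E_0=S(\{0,1,2,9\},(3^{-n})_n)$; (b) $E$ has empty interior in $\mathbb R^2$; (c) for every $t\in(0,\tfrac98)$ and every $\varepsilon>0$, the open ball $B((t,0),\varepsilon)$ contains a point $p$ such that $\{p\}$ is a connected component of $E$.
   Context: For an absolutely convergent series $\sum_n v_n$ in $\mathbb R^2$, its achievement set is $E(v_n)=\{\sum_{n=1}^\infty \varepsilon_n v_n : (\varepsilon_n)\in\{0,1\}^{\mathbb N}\}$; $E(x_n,y_n)$ denotes the achievement set of $((x_n,y_n))_n$. For $A\subset\mathbb R^2$, $A_0=\{s\in\mathbb R:(s,0)\in A\}$. For a finite $P\subset\mathbb R$ and a sequence $(a_n)$, $S(P,a)=\{\sum_{n=1}^\infty \varepsilon_n a_n : (\varepsilon_n)\in P^{\mathbb N}\}$. *)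

(* Defs.v *)
From mathcomp Require Import all_boot all_order all_algebra.
From mathcomp Require Import all_classical all_reals all_analysis.
Set Implicit Arguments. Unset Strict Implicit. Unset Printing Implicit Defensive.
Import Order.TTheory GRing.Theory Num.Theory.
Import numFieldNormedType.Exports.
Local Open Scope classical_set_scope.
Local Open Scope ring_scope.

(* Sequences are 0-indexed: index k here corresponds to index k+1 in the paper. *)

(* Achievement set E(x_n, y_n) in R^2 = R * R:
   all sums  sum_k eps_k (x_k, y_k)  with eps in {0,1}^N
   (convergence in R^2 = convergence of both coordinates). *)
Definition achievement2 (R : realType) (x y : nat -> R) : set (R * R) :=
  [set p | exists eps : nat -> bool,
      (series (fun k => (eps k)%:R * x k) @ \oo --> p.1) /\
      (series (fun k => (eps k)%:R * y k) @ \oo --> p.2)].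

Definition slice0 (R : realType) (A : set (R * R)) : set R :=
  [set s | A (s, 0)].

Definition Sset (R : realType) (P : set R) (a : nat -> R) : set R :=
  [set s | exists eps : nat -> R, (forall k, P (eps k)) /\
      series (fun k => eps k * a k) @ \oo --> s].

(* x_{4n+1}=0, x_{4n+2}=3^{-(n+1)}, x_{4n+3}=2*3^{-(n+1)}, x_{4n+4}=9*3^{-(n+1)}
   (paper index 4n+1+r  <->  our index 4n+r) *)
Definition xseq (R : realType) (k : nat) : R :=
  let n := (k %/ 4)%N in
  let c : R := (3%:R ^+ n.+1)^-1 in
  match (k %% 4)%N with
  | 0%N => 0
  | 1%N => c
  | 2%N => 2%:R * c
  | _ => 9%:R * c
  end.

Definition yseq (R : realType) (k : nat) : R :=
  let n := (k %/ 4)%N in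
  let c : R := (6%:R ^+ n.+1)^-1 in
  match (k %% 4)%N with
  | 0%N => c
  | _ => - c
  end.

Definition pow3inv (R : realType) (k : nat) : R := (3%:R ^+ k.+1)^-1.

Definition eball (R : realType) (c : R * R) (e : R) : set (R * R) :=
  [set p | (p.1 - c.1) ^+ 2 + (p.2 - c.2) ^+ 2 < e ^+ 2].

(* Main.v *)
Require Import Defs.
From mathcomp Require Import all_boot all_order all_algebra.
From mathcomp Require Import all_classical all_reals all_analysis.
From mathcomp Require Import zify ring lra.
Import Order.TTheory GRing.Theory Num.Theory.
Import numFieldNormedType.Exports.
Local Open Scope classical_set_scope.
Local Open Scope ring_scope.

Lemma div4 n r : (r < 4)%N -> ((4 * n + r) %/ 4 = n)%N.
Proof. move=> hr; rewrite mulnC divnMDl // divn_small //; lia. Qed.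
Lemma mod4 n r : (r < 4)%N -> ((4 * n + r) %% 4 = r)%N.
Proof. move=> hr; rewrite mulnC modnMDl modn_small //. Qed.

Lemma xseq0 (R : realType) n : xseq R (4 * n)%N = 0.
Proof. rewrite /xseq; have -> : ((4 * n)%N %/ 4 = n)%N by lia. by have -> : ((4 * n)%N %% 4 = 0)%N by lia. Qed.
Lemma xseq1 (R : realType) n : xseq R (4 * n + 1)%N = (3%:R ^+ n.+1)^-1.
Proof. by rewrite /xseq div4 // mod4. Qed.
Lemma xseq2 (R : realType) n : xseq R (4 * n + 2)%N = 2%:R * (3%:R ^+ n.+1)^-1.
Proof. by rewrite /xseq div4 // mod4. Qed.
Lemma xseq3 (R : realType) n : xseq R (4 * n + 3)%N = 9%:R * (3%:R ^+ n.+1)^-1.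
Proof. by rewrite /xseq div4 // mod4. Qed.
Lemma yseq0 (R : realType) n : yseq R (4 * n)%N = (6%:R ^+ n.+1)^-1.
Proof. rewrite /yseq; have -> : ((4 * n)%N %/ 4 = n)%N by lia. by have -> : ((4 * n)%N %% 4 = 0)%N by lia. Qed.
Lemma yseqS (R : realType) n r : (0 < r < 4)%N -> yseq R (4 * n + r)%N = - (6%:R ^+ n.+1)^-1.
Proof. case/andP=> h1 h2; rewrite /yseq div4 // mod4 //; by case: r h1 h2 => [|[|[|[|]]]]. Qed.

Definition bl (eps : nat -> bool) (n : nat) : int :=
  (eps (4 * n)%N)%:Z - (eps (4 * n + 1)%N)%:Z - (eps (4 * n + 2)%N)%:Z - (eps (4 * n + 3)%N)%:Z.
Definition dxn (eps : nat -> bool) (n : nat) : nat :=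
  (eps (4 * n + 1)%N + 2 * eps (4 * n + 2)%N + 9 * eps (4 * n + 3)%N)%N.
Definition Tx (R : realType) (d : nat -> nat) n : R := (d n)%:R * (3%:R ^+ n.+1)^-1.
Definition Ty (R : realType) (b : nat -> int) n : R := (b n)%:~R * (6%:R ^+ n.+1)^-1.

Lemma series4 (R : realType) (u : nat -> R) m :
  series u (4 * m.+1)%N = series u (4 * m)%N + (u (4 * m)%N + u (4 * m + 1)%N + u (4 * m + 2)%N + u (4 * m + 3)%N).
Proof.
have -> : (4 * m.+1 = (4 * m + 3)%N.+1)%N by lia.
rewrite seriesSr; have -> : (4 * m + 3 = (4 * m + 2)%N.+1)%N by lia.
rewrite seriesSr; have -> : (4 * m + 2 = (4 * m + 1)%N.+1)%N by lia.
rewrite seriesSr; have -> : (4 * m + 1 = (4 * m)%N.+1)%N by lia.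
by rewrite seriesSr !addrA.
Qed.

Lemma blockX (R : realType) (eps : nat -> bool) m :
  series (fun k => (eps k)%:R * xseq R k) (4 * m)%N = series (Tx R (dxn eps)) m.
Proof.
elim: m => [|m IH]; first by rewrite muln0 /series /= !big_geq.
rewrite series4 IH seriesSr xseq0 xseq1 xseq2 xseq3 /Tx /dxn; congr (_ + _).
rewrite !natrD; ring.
Qed.

Lemma blockY (R : realType) (eps : nat -> bool) m :
  series (fun k => (eps k)%:R * yseq R k) (4 * m)%N = series (Ty R (bl eps)) m.
Proof.
elim: m => [|m IH]; first by rewrite muln0 /series /= !big_geq.
rewrite series4 IH seriesSr yseq0 !yseqS // /Ty /bl; congr (_ + _).
rewrite !intrD !intrN; ring.
Qed.

Lemma powle (R : realType) (a b : R) n : 0 <= a -> a <= b -> a ^+ n <= b ^+ n.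
Proof.
move=> a0 ab; elim: n => [|n IH]; first by rewrite !expr0.
rewrite !exprS; apply: ler_pM => //; exact: exprn_ge0.
Qed.

Lemma keybound (R : realType) k :
  (3%:R ^+ (k %/ 4).+1)^-1 <= 2%:R * ((4%:R / 5%:R) ^+ k : R).
Proof.
rewrite {2}(divn_eq k 4); set n := (k %/ 4)%N; set r := (k %% 4)%N.
have hr : (r < 4)%N by rewrite ltn_mod.
rewrite exprD exprM.
rewrite -exprM mulnC exprM.
set q : R := 4%:R / 5%:R.
have q0 : 0 <= q by rewrite divr_ge0.
have q1 : q <= 1 by rewrite ler_pdivrMr ?ltr0n // mul1r ler_nat.
have hC : 64%:R / 125%:R <= q ^+ r.
  apply: (@le_trans _ _ (q ^+ 3)).
    by rewrite /q expr_div_n -!natrX ler_pdivrMr ?ltr0n // mulrAC ler_pdivlMr ?ltr0n // -!natrM ler_nat.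
  rewrite -(subnK (_ : r <= 3)%N); last by lia.
  by rewrite exprD ler_piMl ?exprn_ge0 // exprn_ile1.
have hA : (3%:R : R) ^- n <= (q ^+ 4) ^+ n.
  rewrite -exprVn; apply: powle; first by rewrite invr_ge0.
  rewrite /q expr_div_n -!natrX (_ : (4^4 = 256)%N) // (_ : (5^4 = 625)%N) //; lra.
have hA0 : 0 <= (3%:R : R) ^- n by rewrite invr_ge0 exprn_ge0.
rewrite exprSr invfM.
set A := (3%:R : R) ^- n in hA hA0 *; set B := (q ^+ 4) ^+ n in hA *; set C := q ^+ r in hC *.
have h3 : (0 : R) < 3%:R by rewrite ltr0n.
rewrite ler_pdivrMr //.
nra.
Qed.

Lemma absx (R : realType) k : `|xseq R k| <= 9%:R * (3%:R ^+ (k %/ 4).+1)^-1.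
Proof.
have h0 : (0 : R) <= (3%:R ^+ (k %/ 4).+1)^-1 by rewrite invr_ge0 exprn_ge0.
rewrite /xseq; case: (k %% 4)%N => [|[|[|r]]] /=.
- by rewrite normr0 mulr_ge0.
- rewrite ger0_norm //; rewrite ler_peMl //; by rewrite ler1n.
- rewrite ger0_norm ?mulr_ge0 //; rewrite ler_pM2r; first by rewrite ler_nat.
  by rewrite invr_gt0 exprn_gt0 // ltr0n.
- by rewrite ger0_norm ?mulr_ge0.
Qed.

Lemma absy (R : realType) k : `|yseq R k| <= 9%:R * (3%:R ^+ (k %/ 4).+1)^-1.
Proof.
have h : `|yseq R k| = (6%:R ^+ (k %/ 4).+1)^-1.
  rewrite /yseq; case: (k %% 4)%N => [|r] /=; rewrite ?normrN ger0_norm // invr_ge0 exprn_ge0 //.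
rewrite h; apply: (@le_trans _ _ ((3%:R ^+ (k %/ 4).+1)^-1)).
  rewrite lef_pV2 ?posrE ?exprn_gt0 ?ltr0n //; apply: powle; rewrite ?ler_nat //.
rewrite ler_peMl ?ler1n // invr_ge0 exprn_ge0 //.
Qed.

Lemma cvg_gen (R : realType) (eps : nat -> bool) (z : nat -> R) :
  (forall k, `|z k| <= 9%:R * (3%:R ^+ (k %/ 4).+1)^-1) ->
  cvgn (series (fun k => (eps k)%:R * z k)).
Proof.
move=> hz; apply: normed_cvg.
apply: (@series_le_cvg _ _ (geometric 18%:R (4%:R / 5%:R))).
- by move=> n /=.
- by move=> n; rewrite /geometric /= mulr_ge0 ?exprn_ge0 ?divr_ge0.
- move=> k; rewrite /geometric /=.
  apply: (@le_trans _ _ `|z k|).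
    rewrite normrM ger0_norm // ler_piMl //; by case: (eps k); rewrite ?ler01.
  apply: (le_trans (hz k)).
  have := keybound R k; rewrite (_ : 18%:R = 9%:R * 2%:R :> R); last by rewrite -natrM.
  move=> hk; rewrite -mulrA ler_pM2l ?ltr0n //.
- apply: is_cvg_geometric_series; rewrite ger0_norm ?divr_ge0 // ltr_pdivrMr ?ltr0n // mul1r ltr_nat //.
Qed.

Definition Xl (R : realType) (eps : nat -> bool) : R :=
  limn (series (fun k => (eps k)%:R * xseq R k)).
Definition Yl (R : realType) (eps : nat -> bool) : R :=
  limn (series (fun k => (eps k)%:R * yseq R k)).

Lemma cvgXl (R : realType) (eps : nat -> bool) : series (fun k => (eps k)%:R * xseq R k) @ \oo --> Xl R eps.
Proof. have h := @cvg_gen R eps _ (@absx R). exact: h. Qed.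
Lemma cvgYl (R : realType) (eps : nat -> bool) : series (fun k => (eps k)%:R * yseq R k) @ \oo --> Yl R eps.
Proof. have h := @cvg_gen R eps _ (@absy R). exact: h. Qed.

Lemma blockXl (R : realType) (eps : nat -> bool) : series (Tx R (dxn eps)) @ \oo --> Xl R eps.
Proof.
have -> : series (Tx R (dxn eps)) = series (fun k => (eps k)%:R * xseq R k) \o (fun m => 4 * m)%N.
  by apply: funext => m /=; rewrite blockX.
apply: cvg_comp; [exact: cvg_mulnl | exact: cvgXl].
Qed.
Lemma blockYl (R : realType) (eps : nat -> bool) : series (Ty R (bl eps)) @ \oo --> Yl R eps.
Proof.
have -> : series (Ty R (bl eps)) = series (fun k => (eps k)%:R * yseq R k) \o (fun m => 4 * m)%N.
  by apply: funext => m /=; rewrite blockY.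
apply: cvg_comp; [exact: cvg_mulnl | exact: cvgYl].
Qed.

Lemma inE2 (R : realType) (p : R * R) :
  achievement2 (@xseq R) (@yseq R) p <-> exists eps, p = (Xl R eps, Yl R eps).
Proof.
split.
- move=> [eps [hx hy]]; exists eps; case: p hx hy => a b /= hx hy.
  by rewrite /Xl /Yl (cvg_lim _ hx) // (cvg_lim _ hy).
- move=> [eps ->]; exists eps; split; [exact: cvgXl | exact: cvgYl].
Qed.

Lemma lim_bnd (R : realType) (u : nat -> R) l a b :
  u @ \oo --> l -> (\forall n \near \oo, a <= u n <= b) -> a <= l <= b.
Proof.
move=> hu hn; have cu : cvgn u by apply/cvg_ex; exists l.
rewrite -(cvg_lim _ hu) //; apply/andP; split.
- apply: limr_ge => //; by apply: filterS hn => n /andP[].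
- apply: limr_le => //; by apply: filterS hn => n /andP[].
Qed.

Fixpoint Iy (b : nat -> int) (K : nat) : int :=
  if K is K'.+1 then 6 * Iy b K' + b K' else 0.

Lemma SI (R : realType) b K : series (Ty R b) K * 6%:R ^+ K = (Iy b K)%:~R.
Proof.
elim: K => [|K IH]; first by rewrite /series /= big_geq // mul0r.
rewrite seriesSr /= mulrDl exprSr mulrA IH /Ty intrD intrM.
have h : (6%:R : R) ^+ K.+1 != 0 by rewrite expf_neq0 // pnatr_eq0.
rewrite -mulrA (exprSr _ K) -(exprSr _ K) mulVf // mulr1 mulrC; congr (_ + _).
Qed.

Lemma SBnd (R : realType) (b : nat -> int) : (forall n, -3 <= b n <= 1)%R ->
  forall j K, - (3%:R : R)/5%:R <= series (Ty R b) (K + j)%N * 6%:R ^+ K - (Iy b K)%:~R <= 1/5%:R.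
Proof.
move=> hb; elim=> [|j IH] K.
  by rewrite addn0 SI subrr; apply/andP; split; lra.
have := IH K.+1; rewrite addSnnS /=.
set S := series (Ty R b) (K + j.+1)%N.
have hbK : (- 3%:R <= (b K)%:~R :> R) && ((b K)%:~R <= 1 :> R).
  have /andP[h1 h2] := hb K; apply/andP; split.
    by rewrite -(intrN R 3) ler_int.
  by rewrite -(ler_int R) in h2.
rewrite exprSr intrD intrM.
move: hbK; set c := (b K)%:~R; set s6 := (6%:R : R) ^+ K; set i := (Iy b K)%:~R.
move=> hbK h.
have -> : S * s6 - i = (S * (s6 * 6%:R) - (6%:~R * i + c) + c) / 6%:R.
  rewrite (_ : 6%:~R = 6%:R :> R) //; field.
move: h hbK; set w := S * (s6 * 6%:R) - (6%:~R * i + c) => h hbK.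
1: done. apply/andP; split; rewrite ?ler_pdivlMr ?ler_pdivrMr ?ltr0n //; lra.
Qed.

Lemma blb (eps : nat -> bool) n : (-3 <= bl eps n <= 1)%R.
Proof.
rewrite /bl; case: (eps (4 * n)%N); case: (eps (4 * n + 1)%N); case: (eps (4 * n + 2)%N);
  by case: (eps (4 * n + 3)%N).
Qed.

Lemma Gy (R : realType) (eps : nat -> bool) K :
  - (3%:R : R)/5%:R <= Yl R eps * 6%:R ^+ K - (Iy (bl eps) K)%:~R <= 1/5%:R.
Proof.
have p6 : (0 : R) < 6%:R ^+ K by rewrite exprn_gt0 // ltr0n.
have := @lim_bnd R _ _ (((Iy (bl eps) K)%:~R - 3%:R/5%:R) / 6%:R ^+ K)
   (((Iy (bl eps) K)%:~R + 1/5%:R) / 6%:R ^+ K) (blockYl R eps).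
have hn : \forall n \near \oo, ((Iy (bl eps) K)%:~R - 3%:R/5%:R) / 6%:R ^+ K <= series (Ty R (bl eps)) n <=
   ((Iy (bl eps) K)%:~R + 1/5%:R) / 6%:R ^+ K.
  exists K => // m /= Km.
  have := @SBnd R _ (@blb eps) (m - K)%N K; rewrite subnKC //.
  move=> /andP[h1 h2]; apply/andP; split.
    rewrite ler_pdivrMr //; lra.
  rewrite ler_pdivlMr //; lra.
move=> /(_ hn) /andP[h1 h2]; apply/andP; split.
  move: h1; rewrite ler_pdivrMr //; lra.
move: h2; rewrite ler_pdivlMr //; lra.
Qed.

Lemma int_small (R : realType) (m : int) : - 1 < (m%:~R : R) -> (m%:~R : R) < 1 -> m = 0.
Proof.
rewrite -(intrN R 1) ltr_int => h1; rewrite -[X in _ < X](mulr1z (1 : R)) ltr_int => h2; lia.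
Qed.

Lemma Iy_eq (R : realType) (eps eps' : nat -> bool) :
  Yl R eps = Yl R eps' -> forall K, Iy (bl eps) K = Iy (bl eps') K.
Proof.
move=> he K; have := Gy R eps K; have := Gy R eps' K; rewrite he.
move=> /andP[h1 h2] /andP[h3 h4].
have : Iy (bl eps) K - Iy (bl eps') K = 0.
  apply: (@int_small R); rewrite intrB; lra.
lia.
Qed.

Lemma bl_eq (R : realType) (eps eps' : nat -> bool) :
  Yl R eps = Yl R eps' -> forall n, bl eps n = bl eps' n.
Proof.
move=> he n; have h1 := @Iy_eq R _ _ he n; have h2 := @Iy_eq R _ _ he n.+1; move: h2 => /=.
rewrite h1; lia.
Qed.

Lemma bigpow (R : realType) (x : R) (c : nat) : (2 <= c)%N -> exists K : nat, x < (c%:R) ^+ K.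
Proof.
move=> hc; exists (Num.Def.archi_bound x).
apply: (lt_le_trans (upper_nthrootP (leqnn _))).
by apply: powle => //; rewrite ler_nat.
Qed.

Lemma noY (R : realType) (eps : nat -> bool) K (m : int) :
  Yl R eps * 6%:R ^+ K <> m%:~R + 3%:R / 10%:R.
Proof.
move=> he; have := Gy R eps K; rewrite he => /andP[h1 h2].
have : (-1 < m - Iy (bl eps) K)%R /\ (m - Iy (bl eps) K < 0)%R.
  rewrite -(ltr_int R) -(ltr_int R) intrB intrN; split; lra.
lia.
Qed.

Lemma gap_pt (R : realType) (a b : R) : a < b ->
  exists K (m : int), a < (m%:~R + 3%:R / 10%:R) / 6%:R ^+ K < b.
Proof.
move=> ab; have [K hK] := @bigpow R (2%:R / (b - a)) 6 isT.
have p6 : (0 : R) < 6%:R ^+ K by rewrite exprn_gt0 // ltr0n.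
have ba : 0 < b - a by rewrite subr_gt0.
move: hK; rewrite ltr_pdivrMr // => hK.
exists K, (Num.floor (a * 6%:R ^+ K) + 1).
have := floor_itv (a * 6%:R ^+ K); set f := Num.floor _ => /andP[f1 f2].
rewrite intrD in f2 *; apply/andP; split.
  rewrite ltr_pdivlMr //; lra.
rewrite ltr_pdivrMr //; nra.
Qed.

Lemma Yconn (R : realType) (A : set R) : is_interval A ->
  (forall y, A y -> exists eps, y = Yl R eps) -> forall y1 y2, A y1 -> A y2 -> y1 = y2.
Proof.
move=> iA hA.
suff H : forall y1 y2, A y1 -> A y2 -> y1 < y2 -> False.
  move=> y1 y2 h1 h2; case: (ltgtP y1 y2) => // h; [exact: (False_ind _ (H _ _ h1 h2 h)) | exact: (False_ind _ (H _ _ h2 h1 h))].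
move=> y1 y2 h1 h2 lt12; have [K [m /andP[c1 c2]]] := @gap_pt R _ _ lt12.
have : A ((m%:~R + 3%:R / 10%:R) / 6%:R ^+ K).
  by apply: (iA y1 y2) => //; rewrite (ltW c1) (ltW c2).
move/hA => [eps he]; apply: (@noY R eps K m); rewrite -he mulfVK // expf_neq0 // pnatr_eq0.
Qed.

Lemma Xconn (R : realType) (A : set R) (N : nat) : is_interval A ->
  (forall x, A x -> exists j : int, x * 3%:R ^+ N = j%:~R) -> forall x1 x2, A x1 -> A x2 -> x1 = x2.
Proof.
move=> iA hA.
have p3 : (0 : R) < 3%:R ^+ N by rewrite exprn_gt0 // ltr0n.
suff H : forall y1 y2, A y1 -> A y2 -> y1 < y2 -> False.
  move=> y1 y2 h1 h2; case: (ltgtP y1 y2) => // h; [exact: (False_ind _ (H _ _ h1 h2 h)) | exact: (False_ind _ (H _ _ h2 h1 h))].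
move=> y1 y2 h1 h2 lt12.
have [j1 e1] := hA _ h1; have [j2 e2] := hA _ h2.
have lj : (j1 < j2)%R by rewrite -(ltr_int R) -e1 -e2 ltr_pM2r.
have lj' : (j1 + 1 <= j2)%R by lia.
move: lj'; rewrite -(ler_int R) intrD -e1 -e2 => lj'.
set c := y1 + 1 / (2%:R * 3%:R ^+ N).
have : A c.
  apply: (iA y1 y2) => //; apply/andP; split.
    by rewrite /c lerDl divr_ge0 // mulr_ge0 // ltW.
  rewrite /c -(ler_pM2r p3) mulrDl; rewrite (_ : 1 / (2%:R * 3%:R ^+ N) * 3%:R ^+ N = 1/2%:R); last first.
    by field; rewrite expf_neq0 // pnatr_eq0.
  lra.
move/hA => [j ej]; move: ej; rewrite /c mulrDl.
rewrite (_ : 1 / (2%:R * 3%:R ^+ N) * 3%:R ^+ N = 1/2%:R); last first.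
  by field; rewrite expf_neq0 // pnatr_eq0.
rewrite e1 => ej.
have : (2 * j1 + 1 = 2 * j)%R.
  apply/eqP; rewrite -(eqr_int R) !intrD !intrM -ej; apply/eqP; field.
1: done. lia.
Qed.

Fixpoint Jx (d : nat -> nat) (K : nat) : nat :=
  if K is K'.+1 then (3 * Jx d K' + d K')%N else 0%N.

Lemma SJ (R : realType) d K : series (Tx R d) K * 3%:R ^+ K = (Jx d K)%:R.
Proof.
elim: K => [|K IH]; first by rewrite /series /= big_geq // mul0r.
rewrite seriesSr /= mulrDl exprSr mulrA IH /Tx natrD natrM.
have h : (3%:R : R) ^+ K.+1 != 0 by rewrite expf_neq0 // pnatr_eq0.
rewrite -mulrA (exprSr _ K) -(exprSr _ K) mulVf // mulr1 mulrC; congr (_ + _).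
Qed.

Lemma series_stab (R : realType) d N : (forall n, (N <= n)%N -> d n = 0%N) ->
  forall m, (N <= m)%N -> series (Tx R d) m = series (Tx R d) N.
Proof.
move=> hd; elim=> [|m IH] hm.
  by have -> : N = 0%N by lia.
case: (leqP N m) => h.
  by rewrite seriesSr IH // /Tx hd // mul0r addr0.
by have -> : N = m.+1 by lia.
Qed.

Lemma X_fin (R : realType) (eps : nat -> bool) N : (forall n, (N <= n)%N -> dxn eps n = 0%N) ->
  Xl R eps = series (Tx R (dxn eps)) N.
Proof.
move=> hd; apply/eqP; rewrite eq_le.
have := @lim_bnd R _ _ (series (Tx R (dxn eps)) N) (series (Tx R (dxn eps)) N) (blockXl R eps).
have hn : \forall n \near \oo, series (Tx R (dxn eps)) N <= series (Tx R (dxn eps)) n <= series (Tx R (dxn eps)) N.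
  by exists N => // m /= Nm; rewrite (@series_stab R _ N) // lexx.
move=> H; have /andP[h1 h2] := H hn; by rewrite h1 h2.
Qed.

Lemma bl0 (eps : nat -> bool) n : bl eps n = 0 ->
  dxn eps n \in [:: 0; 1; 2; 9]%N.
Proof.
rewrite /bl /dxn; case: (eps (4 * n)%N); case: (eps (4 * n + 1)%N); case: (eps (4 * n + 2)%N);
  by case: (eps (4 * n + 3)%N).
Qed.

Lemma bl1 (eps : nat -> bool) n : bl eps n = 1 -> dxn eps n = 0%N.
Proof.
rewrite /bl /dxn; case: (eps (4 * n)%N); case: (eps (4 * n + 1)%N); case: (eps (4 * n + 2)%N);
  by case: (eps (4 * n + 3)%N).
Qed.

Definition shiftd (d0 : nat) (D : nat -> nat) n := if n is n'.+1 then D n' else d0.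

Lemma shift_series (R : realType) d0 D m :
  series (Tx R (shiftd d0 D)) m.+1 = d0%:R / 3%:R + series (Tx R D) m / 3%:R.
Proof.
rewrite !seriesEord /= big_ord_recl /= /Tx /= expr1; congr (_ + _).
rewrite mulr_suml; apply: eq_bigr => i _ /=; rewrite /bump /= add1n exprS invfM; ring.
Qed.

Lemma approx (R : realType) L : forall t : R, 0 <= t -> t <= 9%:R / 8%:R ->
  exists D M, (forall n, D n \in [:: 0; 1; 2; 9]%N) /\ (forall n, (M <= n)%N -> D n = 0%N) /\
    0 <= t - series (Tx R D) M <= (9%:R / 8%:R) / 3%:R ^+ L.
Proof.
elim: L => [|L IH] t t0 t1.
  exists (fun _ => 0%N), 0%N; split => //; split => //.
  by rewrite /series /= big_geq // subr0 expr0 divr1 t0 t1.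
have p3 : (0 : R) < 3%:R ^+ L by rewrite exprn_gt0 // ltr0n.
have step : forall (d0 : nat) (t' : R), d0 \in [:: 0; 1; 2; 9]%N -> t' = 3%:R * t - d0%:R ->
    0 <= t' -> t' <= 9%:R / 8%:R ->
    exists D M, (forall n, D n \in [:: 0; 1; 2; 9]%N) /\ (forall n, (M <= n)%N -> D n = 0%N) /\
      0 <= t - series (Tx R D) M <= (9%:R / 8%:R) / 3%:R ^+ L.+1.
  move=> d0 t' hd0 ht' t'0 t'1; have [D [M [hD [hM hb]]]] := IH t' t'0 t'1.
  exists (shiftd d0 D), M.+1; split; first by case.
  split; first by case => // n /= h; apply: hM.
  rewrite shift_series; move: hb; rewrite ht' exprS invfM.
  set s := series (Tx R D) M => /andP[h1 h2]; apply/andP; split.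
    lra.
  rewrite mulrCA ler_pdivlMl ?ltr0n //; move: h2; set q := _ / 3%:R ^+ L; lra.
case: (lerP (3%:R * t) (9%:R / 8%:R)) => h1.
  by apply: (step 0%N (3%:R * t)) => //; [rewrite subr0 | lra].
case: (lerP (3%:R * t) (17%:R / 8%:R)) => h2.
  by apply: (step 1%N (3%:R * t - 1)) => //; lra.
case: (lerP (3%:R * t) (25%:R / 8%:R)) => h3.
  by apply: (step 2%N (3%:R * t - 2%:R)) => //; lra.
have [D [M [hD [hM hb]]]] := IH (9%:R * t - 9%:R) ltac:(lra) ltac:(lra).
exists (shiftd 0 (shiftd 9 D)), M.+2; split; first by case => // [] [].
split; first by case => // [] [] // n /= h; apply: hM.
rewrite shift_series shift_series; move: hb; rewrite exprS invfM.
set s := series (Tx R D) M => /andP[g1 g2]; apply/andP; split.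
  lra.
rewrite mulrCA ler_pdivlMl ?ltr0n //; move: g2; set q := _ / 3%:R ^+ L => g2.
have q0 : 0 <= q by rewrite divr_ge0 // ?divr_ge0 // ltW.
lra.
Qed.

Definition mkeps (D : nat -> nat) (tl : nat -> bool) (k : nat) : bool :=
  if tl (k %/ 4)%N then (k %% 4 == 0)%N else
  match (k %% 4)%N with
  | 0%N => D (k %/ 4)%N != 0%N
  | 1%N => D (k %/ 4)%N == 1%N
  | 2%N => D (k %/ 4)%N == 2%N
  | _ => D (k %/ 4)%N == 9%N
  end.

Lemma mkeps_bl D tl n : D n \in [:: 0; 1; 2; 9]%N ->
  bl (mkeps D tl) n = (if tl n then 1 else 0) /\ dxn (mkeps D tl) n = (if tl n then 0 else D n)%N.
Proof.
move=> hD; rewrite /bl /dxn /mkeps.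
have -> : ((4 * n)%N %/ 4 = n)%N by lia.
have -> : ((4 * n)%N %% 4 = 0)%N by lia.
rewrite !div4 // !mod4 //.
case: (tl n) => //.
move: hD; rewrite !inE => /orP[/eqP->|/orP[/eqP->|/orP[/eqP->|/eqP->]]] //.
Qed.

Lemma Iy0 (b : nat -> int) K : (forall n, (n < K)%N -> b n = 0) -> Iy b K = 0.
Proof.
elim: K => [|K IH] h //=; rewrite IH ?h //; move=> n hn; apply: h; lia.
Qed.

Lemma Yl0 (R : realType) (eps : nat -> bool) : Yl R eps = 0 -> forall n, bl eps n = 0.
Proof.
move=> hY.
have hI : forall K, Iy (bl eps) K = 0.
  move=> K; have := Gy R eps K; rewrite hY mul0r sub0r => /andP[h1 h2].
  by apply: (@int_small R); rewrite ?intrN; lra.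
move=> n; have := hI n.+1; rewrite /= hI; lia.
Qed.

Lemma partA (R : realType) :
  slice0 (achievement2 (@xseq R) (@yseq R)) = Sset [set d : R | d = 0 \/ d = 1 \/ d = 2%:R \/ d = 9%:R]
                      (@pow3inv R).
Proof.
apply/seteqP; split => s.
- rewrite /slice0 /= => /inE2 [eps [hs h0]].
  have hb := @Yl0 R _ (esym h0).
  exists (fun n => (dxn eps n)%:R); split.
    move=> k; have := @bl0 _ _ (hb k); rewrite !inE => /orP[/eqP->|/orP[/eqP->|/orP[/eqP->|/eqP->]]] /=; tauto.
  have -> : series (fun k => (dxn eps k)%:R * pow3inv R k) = series (Tx R (dxn eps)) by [].
  rewrite hs; exact: blockXl.
- move=> [e [he hse]].
  pose D n : nat := if e n == 0 then 0%N else if e n == 1 then 1%N else if e n == 2%:R then 2%N else 9%N.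
  have hD : forall n, D n \in [:: 0; 1; 2; 9]%N.
    by move=> n; rewrite /D; case: (e n == 0); case: (e n == 1); case: (e n == 2%:R).
  have hDe : forall n, (D n)%:R = e n.
    move=> n; rewrite /D; case: (he n) => [->|[->|[->|->]]]; rewrite ?eqxx //.
    + by rewrite oner_eq0.
    + by rewrite pnatr_eq0 (eqr_nat R 2 1).
    + by rewrite pnatr_eq0 (eqr_nat R 9 1) (eqr_nat R 9 2).
  pose eps := mkeps D (fun _ => false).
  rewrite /slice0 /=; apply/inE2; exists eps; congr (_, _).
  + have h1 : series (Tx R (dxn eps)) = series (fun k => e k * pow3inv R k).
      apply: funext => m; rewrite /series /=; apply: eq_bigr => k _.
      by rewrite /Tx (@mkeps_bl D _ k (hD k)).2 /= hDe.
    have := blockXl R eps; rewrite h1 => h2.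
    exact: (cvg_unique _ hse h2).
  + apply/eqP; rewrite eq_le.
    have := @lim_bnd R _ _ 0 0 (blockYl R eps).
    have hn : \forall n \near \oo, 0 <= series (Ty R (bl eps)) n <= 0.
      exists 0%N => // m _; rewrite /series /= big1 ?lexx // => k _.
      by rewrite /Ty (@mkeps_bl D _ k (hD k)).1 mul0r.
    move=> H; have /andP[h1 h2] := H hn; by rewrite h1 h2.
Qed.

Lemma partB (R : realType) : interior (achievement2 (@xseq R) (@yseq R)) = set0.
Proof.
apply/seteqP; split => // q hq; exfalso.
have hc : (fun y : R => (q.1, y)) @ q.2 --> (q.1, q.2).
  have h := @cvg_pair _ _ _ (nbhs q.2) (nbhs q.1) (nbhs q.2) _ _ _ (fun _ => q.1) id (cvg_cst _) cvg_id.
  exact: h.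
have hE : nbhs q.2 [set y | achievement2 (@xseq R) (@yseq R) (q.1, y)].
  apply: hc; case: q hq => a b hq; exact: hq.
move/nbhs_ballP: hE => [d d0 hd].
have {}d0 : 0 < d := d0. have [K [m /andP[c1 c2]]] := @gap_pt R q.2 (q.2 + d) ltac:(lra).
have : achievement2 (@xseq R) (@yseq R) (q.1, (m%:~R + 3%:R / 10%:R) / 6%:R ^+ K).
  apply: hd; rewrite /ball /= ltr_norml; apply/andP; split; lra.
move=> /inE2 [eps [_ he]]; apply: (@noY R eps K m); rewrite -he mulfVK // expf_neq0 // pnatr_eq0.
Qed.

Lemma csnd (R : realType) : continuous (snd : R * R -> R).
Proof. move=> [a b]; exact: cvg_snd. Qed.
Lemma cfst (R : realType) : continuous (fst : R * R -> R).
Proof. move=> [a b]; exact: cvg_fst. Qed.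

Lemma series_eqN (R : realType) (d d' : nat -> nat) N : (forall n, (n < N)%N -> d n = d' n) ->
  series (Tx R d) N = series (Tx R d') N.
Proof.
move=> h; rewrite !seriesEord /=; apply: eq_bigr => i _; by rewrite /Tx h.
Qed.

Lemma compC (R : realType) (eps : nat -> bool) N :
  (forall n, bl eps n = if (N <= n)%N then 1 else 0) ->
  connected_component (achievement2 (@xseq R) (@yseq R)) (Xl R eps, Yl R eps) = [set (Xl R eps, Yl R eps)].
Proof.
move=> hbl.
set E := achievement2 (@xseq R) (@yseq R); set p := (Xl R eps, Yl R eps).
have Ep : E p by apply/inE2; exists eps.
set C := connected_component E p.
have CE : C `<=` E := @connected_component_sub _ E p.
have cC : connected C := @component_connected _ E p.
have Cp : C p := connected_component_refl Ep.
apply/seteqP; split; last by move=> _ ->.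
have hY : forall z, C z -> z.2 = p.2.
  have c2 : connected (snd @` C).
    by apply: connected_continuous_connected => //; apply: continuous_subspaceT; exact: csnd.
  have i2 := (connected_intervalP _).1 c2.
  move=> z Cz; apply: (@Yconn R _ i2).
  - move=> y [w Cw <-]; have /inE2 [e' ->] := CE _ Cw; by exists e'.
  - by exists z.
  - by exists p.
have hX : forall x, (fst @` C) x -> exists j : int, x * 3%:R ^+ N = j%:~R.
  move=> x [z Cz <-]; have /inE2 [e' ez] := CE _ Cz.
  have h2 := hY _ Cz; rewrite ez /= in h2.
  have hb := @bl_eq R _ _ h2.
  have hd : forall n, (N <= n)%N -> dxn e' n = 0%N.
    by move=> n hn; apply: bl1; rewrite hb hbl hn.
  exists (Jx (dxn e') N)%:Z; rewrite ez /= (@X_fin R _ _ hd) SJ //.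
have c1 : connected (fst @` C).
  by apply: connected_continuous_connected => //; apply: continuous_subspaceT; exact: cfst.
have i1 := (connected_intervalP _).1 c1.
move=> z Cz; have e2 := hY _ Cz.
have e1 : z.1 = p.1 by apply: (@Xconn R _ N i1 hX); [exists z | exists p].
by case: z e1 e2 Cz => a b /= -> ->.
Qed.

Lemma partC (R : realType) (t e : R) : 0 < t -> t < 9%:R / 8%:R -> 0 < e ->
  exists p : R * R, eball (t, 0) e p /\ achievement2 (@xseq R) (@yseq R) p /\
    connected_component (achievement2 (@xseq R) (@yseq R)) p = [set p].
Proof.
move=> t0 t1 e0.
have [L hL] := @bigpow R ((9%:R / 8%:R) / (e / 2%:R)) 3 isT.
have [D [M [hD [hM hb]]]] := @approx R L t (ltW t0) (ltW t1).
have [K hK] := @bigpow R ((3%:R / 5%:R) / (e / 2%:R)) 6 isT.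
set N := maxn M K.
pose eps := mkeps D (fun n => (N <= n)%N).
have hbl : forall n, bl eps n = if (N <= n)%N then 1 else 0.
  by move=> n; rewrite (@mkeps_bl D _ n (hD n)).1.
have hdx : forall n, dxn eps n = if (N <= n)%N then 0%N else D n.
  by move=> n; rewrite (@mkeps_bl D _ n (hD n)).2.
have hX : Xl R eps = series (Tx R D) M.
  rewrite (@X_fin R eps N); last by move=> n hn; rewrite hdx hn.
  rewrite (@series_eqN R _ D); last by move=> n hn; rewrite hdx leqNgt hn.
  apply: series_stab => //; exact: leq_maxl.
have hI : Iy (bl eps) N = 0 by apply: Iy0 => n hn; rewrite hbl leqNgt hn.
have := Gy R eps N; rewrite hI subr0 => /andP[g1 g2].
have p6K : (0 : R) < 6%:R ^+ K by rewrite exprn_gt0 // ltr0n.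
have p3L : (0 : R) < 3%:R ^+ L by rewrite exprn_gt0 // ltr0n.
have hKN : (6%:R : R) ^+ K <= 6%:R ^+ N.
  rewrite /N -(subnK (leq_maxr M K)) exprD ler_peMl //.
  by apply: exprn_ege1; rewrite ler1n.
have hY : `|Yl R eps| < e / 2%:R.
  move: hK; rewrite ltr_pdivrMr ?divr_gt0 ?ltr0n // => hK.
  set Y := Yl R eps in g1 g2 *; set s6 := (6%:R : R) ^+ N in g1 g2 hKN.
  set s := (6%:R : R) ^+ K in hK hKN p6K.
  rewrite ltr_norml; apply/andP; split; nra.
have hXt : `|Xl R eps - t| < e / 2%:R.
  move: hL; rewrite ltr_pdivrMr ?divr_gt0 ?ltr0n // => hL.
  rewrite hX; move: hb; set s := series (Tx R D) M => /andP[h1 h2].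
  move: h2; rewrite ler_pdivlMr // => h2.
  rewrite ltr_norml; apply/andP; split; nra.
exists (Xl R eps, Yl R eps); split; last split.
- rewrite /eball /= subr0.
  move: hY hXt; rewrite !ltr_norml => /andP[y1 y2] /andP[x1 x2]; nra.
- by apply/inE2; exists eps.
- exact: (@compC R eps N hbl).
Qed.

Theorem mainTheorem8 (R : realType) :
  let E := achievement2 (@xseq R) (@yseq R) in
  [/\ slice0 E = Sset [set d : R | d = 0 \/ d = 1 \/ d = 2%:R \/ d = 9%:R]
                      (@pow3inv R),
      interior E = set0 &
      forall t e : R, 0 < t -> t < 9%:R / 8%:R -> 0 < e ->
        exists p : R * R, eball (t, 0) e p /\ E p /\
          connected_component E p = [set p]].
Proof.
move=> E; split; [exact: partA | exact: partB | exact: partC].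
Qed.
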